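(* Let $C=(c_{k,j})\in\mathbb{R}_{\max}^{p\times n}$, $\mu^+\in\mathbb{Z}_{\ge0}^p$, $\mu^-\in\mathbb{Z}_{\ge0}^n$ with $\sum_{k\in[p]}\mu^+_k=\sum_{j\in[n]}\mu^-_j$, and $f(x)=\sum_{k=1}^p\mu^+_k\max_{j\in[n]}(c_{k,j}+x_j)-\sum_{j=1}^n\mu^-_jx_j$. Then: (1) $f(\alpha\otimes x)=f(x)$ for any $x\in\mathbb{R}_{\max}^n$ and $\alpha\in\mathbb{R}$; (2) $f(x)+f(y)\ge f(x\oplus y)+f(x\oplus' y)$ for any $x,y\in\mathbb{R}_{\max}^n$.
   Context: $\mathbb{R}_{\max}=\mathbb{R}\cup\{-\infty\}$; $\alpha\otimes x$ is the vector with entries $\alpha+x_j$; $x\oplus y$ and $x\oplus' y$ are the entrywise maximum and minimum of $x$ and $y$. The identities are understood for vectors on which $f$ is well defined. *)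

(* Defs.v *)
From HB Require Import structures.
From mathcomp Require Import all_boot all_order all_algebra.
From mathcomp Require Import all_classical all_reals ereal.
Set Implicit Arguments. Unset Strict Implicit. Unset Printing Implicit Defensive.
Import Order.TTheory GRing.Theory Num.Theory.
Local Open Scope ring_scope.
Local Open Scope ereal_scope.

(* R_max = R ∪ {-oo} is modelled inside \bar R by the elements different from +oo. *)
Definition Rmax_elt (R : realType) (e : \bar R) : Prop := e != +oo.

Definition tscal (R : realType) (n : nat) (a : R) (x : 'I_n -> \bar R) : 'I_n -> \bar R :=
  fun j => a%:E + x j.
Definition tmax (R : realType) (n : nat) (x y : 'I_n -> \bar R) : 'I_n -> \bar R :=
  fun j => maxe (x j) (y j).
Definition tmin (R : realType) (n : nat) (x y : 'I_n -> \bar R) : 'I_n -> \bar R :=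
  fun j => mine (x j) (y j).

(* positive part  sum_k mu+_k max_j (c_{k,j} + x_j)  (in R ∪ {-oo}; 0 * -oo = 0) *)
Definition fpos (R : realType) (p n : nat) (C : 'I_p -> 'I_n -> \bar R)
  (mup : 'I_p -> nat) (x : 'I_n -> \bar R) : \bar R :=
  \sum_(k < p) ((mup k)%:R)%:E * (\big[maxe/-oo]_(j < n) (C k j + x j)).

Definition fneg (R : realType) (n : nat) (mum : 'I_n -> nat) (x : 'I_n -> \bar R) : \bar R :=
  \sum_(j < n) ((mum j)%:R)%:E * x j.

Definition ftrop (R : realType) (p n : nat) (C : 'I_p -> 'I_n -> \bar R)
  (mup : 'I_p -> nat) (mum : 'I_n -> nat) (x : 'I_n -> \bar R) : \bar R :=
  fpos C mup x - fneg mum x.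

(* f(x) is well defined: it is not of the form (-oo) - (-oo), i.e. the
   expansion does not contain both a -oo term and a +oo term. *)
Definition f_welldef (R : realType) (p n : nat) (C : 'I_p -> 'I_n -> \bar R)
  (mup : 'I_p -> nat) (mum : 'I_n -> nat) (x : 'I_n -> \bar R) : Prop :=
  ~ (fpos C mup x = -oo /\ fneg mum x = -oo).

(* Main.v *)
Require Import Defs.
From HB Require Import structures.
From mathcomp Require Import all_boot all_order all_algebra.
From mathcomp Require Import all_classical all_reals ereal.
From mathcomp Require Import lra.
Import Order.TTheory GRing.Theory Num.Theory.
Local Open Scope ring_scope.
Local Open Scope ereal_scope.

Section Aux.
Variable R : realType.
Implicit Types (x y a b : \bar R).

Lemma addmax a x y : a != +oo -> a + maxe x y = maxe (a + x) (a + y).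
Proof.
case: a => [a| |] // _; first by rewrite !maxEle leeD2lE //; case: ifP.
Qed.

Lemma defok a b : a != +oo -> b != +oo -> a +? b.
Proof. by case: a => [a| |] // _; case: b => [b| |]. Qed.

Lemma addnoty a b : a != +oo -> b != +oo -> a + b != +oo.
Proof. by case: a => [a| |] // _; case: b => [b| |]. Qed.

Lemma mulnoty (m : nat) a : a != +oo -> (m%:R)%:E * a != +oo.
Proof.
case: a => [a| |] // _.
rewrite /mule /=. case: m => [|m] /=; first by rewrite eqxx.
by rewrite lte_fin ltr0Sn; case: ifP.
Qed.

Lemma maxmin a b : maxe a b + mine a b = a + b.
Proof. by rewrite maxEle minEle; case: ifP => // _; rewrite addeC. Qed.

Lemma bigshift n (a : R) (F : 'I_n -> \bar R) :
  \big[maxe/-oo]_(j < n) (a%:E + F j) = a%:E + \big[maxe/-oo]_(j < n) F j.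
Proof.
apply: (big_rec2 (fun u v => u = a%:E + v)) => [//|i u v _ ->].
by rewrite addmax.
Qed.

Lemma bigsplit n (F G : 'I_n -> \bar R) :
  \big[maxe/-oo]_(j < n) maxe (F j) (G j) =
  maxe (\big[maxe/-oo]_(j < n) F j) (\big[maxe/-oo]_(j < n) G j).
Proof.
apply: (big_rec3 (fun u v w => u = maxe v w)) => [|i u v w _ ->].
  by rewrite maxxx.
by rewrite maxACA.
Qed.

Lemma bigmono n (F G : 'I_n -> \bar R) : (forall j, F j <= G j) ->
  \big[maxe/-oo]_(j < n) F j <= \big[maxe/-oo]_(j < n) G j.
Proof.
move=> H; apply: (big_rec2 (fun u v => u <= v)) => [//|i u v _ uv].
exact: le_max2.
Qed.

Lemma bignoty n (F : 'I_n -> \bar R) : (forall j, F j != +oo) ->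
  \big[maxe/-oo]_(j < n) F j != +oo.
Proof.
move=> H; apply: (big_rec (fun u => u != +oo)) => [//|i u _ uv].
by rewrite maxEle; case: ifP.
Qed.

Lemma sumnoty n (F : 'I_n -> \bar R) : (forall j, F j != +oo) ->
  \sum_(j < n) F j != +oo.
Proof.
move=> H; apply: (big_rec (fun u => u != +oo)) => [//|i u _ uv].
exact: addnoty.
Qed.

Lemma keyineq (P1 P2 P3 P4 N1 N2 N3 N4 : \bar R) :
  P1 != +oo -> P2 != +oo -> P3 != +oo -> P4 != +oo ->
  N1 != +oo -> N2 != +oo -> N3 != +oo -> N4 != +oo ->
  P3 + P4 <= P1 + P2 -> N1 + N2 = N3 + N4 ->
  (P3 - N3) + (P4 - N4) <= (P1 - N1) + (P2 - N2).
Proof.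
move=> h1 h2 h3 h4 h5 h6 h7 h8 H E.
move: h3 H; case: P3 => [p3| |] // _ H; try by rewrite !addNye leNye.
move: h4 H; case: P4 => [p4| |] // _ H; try by rewrite addNye addeNy leNye.
move: h1 H; case: P1 => [p1| |] // _ H; try by move: H; rewrite addNye leeNy_eq.
move: h2 H; case: P2 => [p2| |] // _ H; try by move: H; rewrite addeNy leeNy_eq.
move: h5 h6 h7 h8 H E.
case: N1 => [n1| |] // _; case: N2 => [n2| |] // _;
case: N3 => [n3| |] // _; case: N4 => [n4| |] // _;
rewrite /= ?lee_fin ?leey // => H; case=> E.
lra.
Qed.

Lemma keyeq (c : R) (P N : \bar R) : P != +oo -> N != +oo ->
  (c%:E + P) - (c%:E + N) = P - N.
Proof.
case: P => [p| |] // _; case: N => [m| |] // _ /=; congr (_%:E); lra.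
Qed.

End Aux.

Theorem corollary3p2 (R : realType) (p n : nat) (C : 'I_p -> 'I_n -> \bar R)
  (mup : 'I_p -> nat) (mum : 'I_n -> nat) :
  (forall k j, Rmax_elt (C k j)) ->
  (\sum_(k < p) mup k = \sum_(j < n) mum j)%N ->
  (forall (x : 'I_n -> \bar R) (a : R),
      (forall j, Rmax_elt (x j)) ->
      f_welldef C mup mum x ->
      ftrop C mup mum (tscal a x) = ftrop C mup mum x) /\
  (forall x y : 'I_n -> \bar R,
      (forall j, Rmax_elt (x j)) -> (forall j, Rmax_elt (y j)) ->
      f_welldef C mup mum x -> f_welldef C mup mum y ->
      f_welldef C mup mum (tmax x y) -> f_welldef C mup mum (tmin x y) ->
      ftrop C mup mum x + ftrop C mup mum y >=
      ftrop C mup mum (tmax x y) + ftrop C mup mum (tmin x y)).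
Proof.
move=> HC Hsum.
have gn : forall k (x : 'I_n -> \bar R), (forall j, x j != +oo) ->
    \big[maxe/-oo]_(j < n) (C k j + x j) != +oo.
  by move=> k x Hx; apply: bignoty => j; apply: addnoty; [exact: HC|exact: Hx].
have fpn : forall (x : 'I_n -> \bar R), (forall j, x j != +oo) ->
    fpos C mup x != +oo.
  by move=> x Hx; apply: sumnoty => k; apply: mulnoty; apply: gn.
have fnn : forall (x : 'I_n -> \bar R), (forall j, x j != +oo) ->
    fneg mum x != +oo.
  by move=> x Hx; apply: sumnoty => k; apply: mulnoty; apply: Hx.
split.
- move=> x a Hx _.
  have Ep : fpos C mup (tscal a x) =
      ((\sum_(k < p) mup k)%:R * a)%:E + fpos C mup x.
    rewrite /fpos natr_sum mulr_suml -sumEFin -big_split /=.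
    apply: eq_bigr => k _.
    have -> : \big[maxe/-oo]_(j < n) (C k j + tscal a x j) =
        a%:E + \big[maxe/-oo]_(j < n) (C k j + x j).
      by rewrite -bigshift; apply: eq_bigr => j _; rewrite /tscal addeCA.
    by rewrite muleDr ?defok ?gn // EFinM.
  have En : fneg mum (tscal a x) =
      ((\sum_(j < n) mum j)%:R * a)%:E + fneg mum x.
    rewrite /fneg natr_sum mulr_suml -sumEFin -big_split /=.
    apply: eq_bigr => j _.
    by rewrite /tscal muleDr ?defok ?Hx // EFinM.
  by rewrite /ftrop Ep En -Hsum keyeq ?fpn ?fnn.
- move=> x y Hx Hy _ _ _ _.
  have Hmx : forall j, tmax x y j != +oo.
    by move=> j; rewrite /tmax maxEle; case: ifP => _; [exact: Hy|exact: Hx].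
  have Hmn : forall j, tmin x y j != +oo.
    by move=> j; rewrite /tmin minEle; case: ifP => _; [exact: Hx|exact: Hy].
  rewrite /ftrop; apply: keyineq; rewrite ?fpn ?fnn //.
    rewrite /fpos -!big_split /=; apply: lee_sum => k _.
    set gx := \big[maxe/-oo]_(j < n) (C k j + x j).
    set gy := \big[maxe/-oo]_(j < n) (C k j + y j).
    have gmax : \big[maxe/-oo]_(j < n) (C k j + tmax x y j) = maxe gx gy.
      rewrite /tmax; under eq_bigr => j _ do rewrite addmax ?HC //.
      exact: bigsplit.
    have gmin : \big[maxe/-oo]_(j < n) (C k j + tmin x y j) <= mine gx gy.
      rewrite le_min; apply/andP; split; apply: bigmono => j; apply: leeD2l;
      by rewrite /tmin ge_min lexx ?orbT.
    rewrite -!muleDr ?defok ?gn //; apply: lee_wpmul2l; first by rewrite lee_fin.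
    by rewrite gmax -(@maxmin R gx gy); apply: leeD2l.
  rewrite /fneg -!big_split /=; apply: eq_bigr => j _.
  by rewrite -!muleDr ?defok ?Hx ?Hy ?Hmx ?Hmn // /tmax /tmin maxmin.
Qed.
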